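(* For any compact set $K\subset\mathbb C\setminus\partial\Delta$ there is $\delta>0$ such that in either of the cases (1) $p\in K$, $|p|>1$, $|q|<1$ and $\operatorname{dist}(q,\partial\Delta)<\delta$, or (2) $q\in K$, $|q|<1$, $|p|>1$ and $\operatorname{dist}(p,\partial\Delta)<\delta$, the Blaschke product $B_{p,q}$ has at least two distinct critical points on $\partial\Delta$.
   Context: $\Delta$ is the unit disk. For $|p|>1$, $|q|<1$, $B_{p,q}(z)=z\,\frac{z-p}{1-\bar pz}\,\frac{z-q}{1-\bar qz}$. *)

(* Defs.v *)
From Stdlib Require Import Reals Lra.
Open Scope R_scope.

Definition Cplx : Type := (R * R)%type.
Definition Cadd (z w : Cplx) : Cplx := (fst z + fst w, snd z + snd w).
Definition Csub (z w : Cplx) : Cplx := (fst z - fst w, snd z - snd w).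
Definition Cmul (z w : Cplx) : Cplx :=
  (fst z * fst w - snd z * snd w, fst z * snd w + snd z * fst w).
Definition Cconj (z : Cplx) : Cplx := (fst z, - snd z).
Definition Cone : Cplx := (1, 0).
Definition Czero : Cplx := (0, 0).
Definition Cnorm (z : Cplx) : R := sqrt (fst z * fst z + snd z * snd z).
Definition Cinv (z : Cplx) : Cplx :=
  let n2 := fst z * fst z + snd z * snd z in (fst z / n2, - snd z / n2).
Definition Cdiv (z w : Cplx) : Cplx := Cmul z (Cinv w).

Definition Blaschke (p q : Cplx) (z : Cplx) : Cplx :=
  Cmul z (Cmul (Cdiv (Csub z p) (Csub Cone (Cmul (Cconj p) z)))
               (Cdiv (Csub z q) (Csub Cone (Cmul (Cconj q) z)))).

Definition Cderiv_at (f : Cplx -> Cplx) (z l : Cplx) : Prop :=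
  forall eps, 0 < eps -> exists d, 0 < d /\
    forall h : Cplx, h <> Czero -> Cnorm h < d ->
      Cnorm (Csub (Cdiv (Csub (f (Cadd z h)) (f z)) h) l) < eps.

Definition critical_point (f : Cplx -> Cplx) (z : Cplx) : Prop := Cderiv_at f z Czero.

(* compact subsets of C = R^2: closed and bounded (Heine-Borel) *)
Definition Cclosed (K : Cplx -> Prop) : Prop :=
  forall z, ~ K z -> exists r, 0 < r /\ forall w, Cnorm (Csub w z) < r -> ~ K w.
Definition Cbounded (K : Cplx -> Prop) : Prop :=
  exists M, forall z, K z -> Cnorm z <= M.
Definition Ccompact (K : Cplx -> Prop) : Prop := Cclosed K /\ Cbounded K.

Definition dist_circle (z : Cplx) : R := Rabs (Cnorm z - 1).

(* Main.v *)
Require Import Defs.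
From Stdlib Require Import Reals Lra Psatz Field Ratan.
Open Scope R_scope.

Definition Copp (z : Cplx) : Cplx := (- fst z, - snd z).
Lemma Cext : forall a b : Cplx, fst a = fst b -> snd a = snd b -> a = b.
Proof. intros [a1 a2] [b1 b2]; simpl; intros; subst; reflexivity. Qed.
Definition n2 (z : Cplx) := fst z * fst z + snd z * snd z.
Lemma Cnz : forall z : Cplx, z <> Czero -> n2 z <> 0.
Proof. intros [a b] H E; apply H; unfold Czero, n2 in *; simpl in *.
  assert (a = 0) by nra; assert (b = 0) by nra; subst; reflexivity. Qed.
Lemma Cring_theory : ring_theory Czero Cone Cadd Cmul Csub Copp (@eq Cplx).
Proof. split; intros; apply Cext; unfold Cadd, Cmul, Csub, Copp, Czero, Cone; simpl; ring. Qed.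
Lemma Cfield_theory : field_theory Czero Cone Cadd Cmul Csub Copp Cdiv Cinv (@eq Cplx).
Proof. split.
  - exact Cring_theory.
  - unfold Cone, Czero; intro H; injection H; lra.
  - reflexivity.
  - intros p Hp. apply Cext; unfold Cmul, Cinv, Cone; simpl; apply Cnz in Hp; unfold n2 in Hp; field; auto.
Qed.
Add Field Cfield : Cfield_theory.

Lemma n2_nonneg z : 0 <= n2 z.  Proof. unfold n2; nra. Qed.
Lemma Cnorm_nonneg z : 0 <= Cnorm z. Proof. apply sqrt_pos. Qed.
Lemma Cnorm_sq z : Cnorm z * Cnorm z = n2 z.
Proof. apply sqrt_sqrt, n2_nonneg. Qed.
Lemma n2_mul a b : n2 (Cmul a b) = n2 a * n2 b.
Proof. unfold n2, Cmul; simpl; ring. Qed.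
Lemma Cnorm_mul a b : Cnorm (Cmul a b) = Cnorm a * Cnorm b.
Proof. unfold Cnorm. fold (n2 (Cmul a b)) (n2 a) (n2 b). rewrite n2_mul.
  apply sqrt_mult; apply n2_nonneg. Qed.
Lemma Cnorm_le_sq a b : 0 <= b -> n2 a <= b * b -> Cnorm a <= b.
Proof. intros Hb H. unfold Cnorm; fold (n2 a). rewrite <- (sqrt_square b Hb).
  apply sqrt_le_1_alt; auto. Qed.
Lemma Cnorm_ge_sq a b : n2 a >= b * b -> b <= Cnorm a.
Proof. intros H. destruct (Rle_or_lt b 0). pose proof (Cnorm_nonneg a); lra.
  unfold Cnorm; fold (n2 a). rewrite <- (sqrt_square b) by lra. apply sqrt_le_1_alt; lra. Qed.
Lemma Cnorm_triangle a b : Cnorm (Cadd a b) <= Cnorm a + Cnorm b.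
Proof. apply Cnorm_le_sq. pose proof (Cnorm_nonneg a); pose proof (Cnorm_nonneg b); lra.
  pose proof (Cnorm_sq a) as Ha; pose proof (Cnorm_sq b) as Hb.
  pose proof (Cnorm_nonneg a); pose proof (Cnorm_nonneg b).
  assert (fst a * fst b + snd a * snd b <= Cnorm a * Cnorm b).
  { destruct (Rle_or_lt (fst a * fst b + snd a * snd b) 0). nra.
    apply Rsqr_incr_0_var; unfold Rsqr. 2: nra.
    replace (Cnorm a * Cnorm b * (Cnorm a * Cnorm b)) with (n2 a * n2 b) by (rewrite <- Ha, <- Hb; ring).
    unfold n2; destruct a as [a1 a2], b as [b1 b2]; simpl; pose proof (Rle_0_sqr (a1*b2-a2*b1)); unfold Rsqr in *; nra. }
  unfold n2, Cadd in *; simpl in *. nra. Qed.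
Lemma Cnorm_opp a : Cnorm (Copp a) = Cnorm a.
Proof. unfold Cnorm, Copp; simpl; f_equal; ring. Qed.
Lemma Cnorm_conj a : Cnorm (Cconj a) = Cnorm a.
Proof. unfold Cnorm, Cconj; simpl; f_equal; ring. Qed.
Lemma Cnorm_sub_le a b : Cnorm (Csub a b) <= Cnorm a + Cnorm b.
Proof. replace (Csub a b) with (Cadd a (Copp b)) by ring. rewrite <- (Cnorm_opp b). apply Cnorm_triangle. Qed.
Lemma Cnorm_rev a b : Cnorm a - Cnorm b <= Cnorm (Csub a b).
Proof. pose proof (Cnorm_triangle (Csub a b) b). replace (Cadd (Csub a b) b) with a in H by ring. lra. Qed.
Lemma Cnorm_sub_sym a b : Cnorm (Csub a b) = Cnorm (Csub b a).
Proof. unfold Cnorm, Csub; simpl; f_equal; ring. Qed.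
Lemma Cnorm_zero_iff a : Cnorm a = 0 -> a = Czero.
Proof. intro H. destruct (Req_dec (fst a) 0), (Req_dec (snd a) 0).
  apply Cext; auto.
  all: exfalso; pose proof (Cnorm_sq a); rewrite H in H2; unfold n2 in H2; nra. Qed.
Lemma Cnorm_pos a : a <> Czero -> 0 < Cnorm a.
Proof. intro H. destruct (Cnorm_nonneg a); auto. exfalso; apply H, Cnorm_zero_iff; auto. Qed.
Lemma Cnorm_one : Cnorm Cone = 1.
Proof. unfold Cnorm, Cone; simpl. replace (1*1+0*0) with 1 by ring. apply sqrt_1. Qed.
Lemma Cnorm_div a b : b <> Czero -> Cnorm (Cdiv a b) = Cnorm a / Cnorm b.
Proof. intro Hb. assert (Cnorm (Cdiv a b) * Cnorm b = Cnorm a).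
  { rewrite <- Cnorm_mul. f_equal. field; auto. }
  pose proof (Cnorm_pos b Hb). rewrite <- H. field. lra. Qed.
Lemma Cnorm_sub0 a : Cnorm (Csub a Czero) = Cnorm a.
Proof. f_equal. ring. Qed.

Definition Nf (p q w : Cplx) := Cmul w (Cmul (Csub w p) (Csub w q)).
Definition Df (p q w : Cplx) := Cmul (Csub Cone (Cmul (Cconj p) w)) (Csub Cone (Cmul (Cconj q) w)).
Definition Wf (p q z : Cplx) :=
  Cadd (Cmul (Csub z p) (Cmul (Csub z q) (Df p q z)))
  (Cadd (Cmul (Csub Cone (Cmul p (Cconj p))) (Cmul z (Cmul (Csub z q) (Csub Cone (Cmul (Cconj q) z)))))
        (Cmul (Csub Cone (Cmul q (Cconj q))) (Cmul z (Cmul (Csub z p) (Csub Cone (Cmul (Cconj p) z)))))).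
Definition Sf (p q z h : Cplx) :=
  Csub (Cmul (Csub (Cadd (Cadd z (Cadd z z)) h) (Cadd p q)) (Df p q z))
       (Cmul (Nf p q z) (Cmul (Cconj p) (Cconj q))).
Lemma E_id p q z h :
  Csub (Cmul (Nf p q (Cadd z h)) (Df p q z)) (Cmul (Nf p q z) (Df p q (Cadd z h)))
  = Cadd (Cmul h (Wf p q z)) (Cmul (Cmul h h) (Sf p q z h)).
Proof. intros. repeat match goal with x : Cplx |- _ => destruct x end;
  apply Cext; unfold Nf, Df, Wf, Sf, Cmul, Csub, Cadd, Cconj, Cone, Czero, Copp; simpl; ring. Qed.

Lemma Blaschke_ND p q w :
  Csub Cone (Cmul (Cconj p) w) <> Czero -> Csub Cone (Cmul (Cconj q) w) <> Czero ->
  Blaschke p q w = Cdiv (Nf p q w) (Df p q w).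
Proof. intros. unfold Blaschke, Nf, Df. field. split; auto. Qed.

Lemma deriv0 f z r C : 0 < r ->
  (forall h, h <> Czero -> Cnorm h < r -> Cnorm (Cdiv (Csub (f (Cadd z h)) (f z)) h) <= C * Cnorm h) ->
  critical_point f z.
Proof.
  intros Hr H eps Heps. exists (Rmin r (eps / (Rabs C + 1))). split.
  - apply Rmin_pos; auto. apply Rdiv_lt_0_compat; auto. pose proof (Rabs_pos C); lra.
  - intros h Hh Hlt. rewrite Cnorm_sub0.
    assert (Hn := Cnorm_pos h Hh).
    assert (H1 : Cnorm h < r) by (eapply Rlt_le_trans; [exact Hlt| apply Rmin_l]).
    assert (H2 : Cnorm h < eps / (Rabs C + 1)) by (eapply Rlt_le_trans; [exact Hlt| apply Rmin_r]).
    specialize (H h Hh H1).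
    assert (C * Cnorm h <= Rabs C * Cnorm h) by (apply Rmult_le_compat_r; [lra| apply Rle_abs]).
    assert (Cnorm h * (Rabs C + 1) < eps).
    { pose proof (Rabs_pos C). apply (Rmult_lt_compat_r (Rabs C + 1)) in H2; [|lra].
      unfold Rdiv in H2. rewrite Rmult_assoc, Rinv_l in H2 by lra. lra. }
    pose proof (Rabs_pos C). nra.
Qed.

Lemma unit_factor p z : Cnorm z = 1 ->
  Cnorm (Csub Cone (Cmul (Cconj p) z)) = Cnorm (Csub z p).
Proof.
  intro Hz. assert (n2 z = 1) by (rewrite <- Cnorm_sq, Hz; ring).
  unfold Cnorm. fold (n2 (Csub Cone (Cmul (Cconj p) z))) (n2 (Csub z p)). f_equal.
  assert (n2 (Csub Cone (Cmul (Cconj p) z)) - n2 (Csub z p) = (n2 p - 1) * (n2 z - 1)).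
  { destruct p, z; unfold n2, Csub, Cmul, Cconj, Cone; simpl; ring. }
  rewrite H in H0. lra.
Qed.

Lemma factor_pos p z : Cnorm z = 1 -> Cnorm p <> 1 -> 0 < Cnorm (Csub Cone (Cmul (Cconj p) z)).
Proof.
  intros Hz Hp. rewrite unit_factor by auto.
  pose proof (Cnorm_rev z p). pose proof (Cnorm_rev p z). rewrite Cnorm_sub_sym in H0. lra.
Qed.

Lemma factor_near p z h a : Cnorm (Csub Cone (Cmul (Cconj p) z)) = a ->
  a - Cnorm p * Cnorm h <= Cnorm (Csub Cone (Cmul (Cconj p) (Cadd z h))).
Proof.
  intro Ha. replace (Csub Cone (Cmul (Cconj p) (Cadd z h))) with
    (Csub (Csub Cone (Cmul (Cconj p) z)) (Cmul (Cconj p) h)) by ring.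
  pose proof (Cnorm_rev (Csub Cone (Cmul (Cconj p) z)) (Cmul (Cconj p) h)).
  rewrite Cnorm_mul, Cnorm_conj in H. lra.
Qed.

Lemma crit_W p q z : Cnorm z = 1 -> Cnorm p <> 1 -> Cnorm q <> 1 -> Wf p q z = Czero ->
  critical_point (Blaschke p q) z.
Proof.
  intros Hz Hp Hq HW.
  set (a := Cnorm (Csub Cone (Cmul (Cconj p) z))).
  set (b := Cnorm (Csub Cone (Cmul (Cconj q) z))).
  assert (Ha : 0 < a) by (apply factor_pos; auto).
  assert (Hb : 0 < b) by (apply factor_pos; auto).
  set (P := Cnorm p). set (Q := Cnorm q).
  assert (HP : 0 <= P) by apply Cnorm_nonneg. assert (HQ : 0 <= Q) by apply Cnorm_nonneg.
  set (X := Csub (Cadd z (Cadd z z)) (Cadd p q)).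
  set (Sb := (Cnorm X + 1) * (a * b) + Cnorm (Nf p q z) * (P * Q)).
  apply (deriv0 _ _ (Rmin 1 (Rmin (a / (2 * (P + 1))) (b / (2 * (Q + 1)))))
                (Sb / ((a/2 * (b/2)) * (a * b)))).
  { repeat apply Rmin_pos; try lra; apply Rdiv_lt_0_compat; lra. }
  intros h Hh Hr.
  assert (Hr1 : Cnorm h < 1) by (eapply Rlt_le_trans; [exact Hr| apply Rmin_l]).
  assert (Hr2 : Cnorm h < a / (2 * (P + 1))) by
    (eapply Rlt_le_trans; [exact Hr| eapply Rle_trans; [apply Rmin_r| apply Rmin_l]]).
  assert (Hr3 : Cnorm h < b / (2 * (Q + 1))) by
    (eapply Rlt_le_trans; [exact Hr| eapply Rle_trans; [apply Rmin_r| apply Rmin_r]]).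
  assert (Hh0 := Cnorm_nonneg h).
  assert (Ha2 : a / 2 <= Cnorm (Csub Cone (Cmul (Cconj p) (Cadd z h)))).
  { pose proof (factor_near p z h a eq_refl). fold P in H.
    assert (P * Cnorm h <= a / 2).
    { apply Rmult_lt_compat_r with (r := 2 * (P+1)) in Hr2; [|lra].
      unfold Rdiv in Hr2. rewrite Rmult_assoc, Rinv_l in Hr2 by lra. nra. }
    lra. }
  assert (Hb2 : b / 2 <= Cnorm (Csub Cone (Cmul (Cconj q) (Cadd z h)))).
  { pose proof (factor_near q z h b eq_refl). fold Q in H.
    assert (Q * Cnorm h <= b / 2).
    { apply Rmult_lt_compat_r with (r := 2 * (Q+1)) in Hr3; [|lra].
      unfold Rdiv in Hr3. rewrite Rmult_assoc, Rinv_l in Hr3 by lra. nra. }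
    lra. }
  assert (nz : forall w, 0 < Cnorm w -> w <> Czero).
  { intros w Hw E. rewrite E in Hw. unfold Cnorm, Czero in Hw; simpl in Hw.
    replace (0*0+0*0) with 0 in Hw by ring. rewrite sqrt_0 in Hw. lra. }
  assert (N1 : Csub Cone (Cmul (Cconj p) z) <> Czero) by (apply nz; auto).
  assert (N2 : Csub Cone (Cmul (Cconj q) z) <> Czero) by (apply nz; auto).
  assert (N3 : Csub Cone (Cmul (Cconj p) (Cadd z h)) <> Czero) by (apply nz; lra).
  assert (N4 : Csub Cone (Cmul (Cconj q) (Cadd z h)) <> Czero) by (apply nz; lra).
  assert (ND1 : Df p q z <> Czero) by (apply nz; unfold Df; rewrite Cnorm_mul; apply Rmult_lt_0_compat; auto).
  assert (ND2 : Df p q (Cadd z h) <> Czero) by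
    (apply nz; unfold Df; rewrite Cnorm_mul; apply Rmult_lt_0_compat; lra).
  assert (Eq : Cdiv (Csub (Blaschke p q (Cadd z h)) (Blaschke p q z)) h =
               Cmul h (Cdiv (Sf p q z h) (Cmul (Df p q (Cadd z h)) (Df p q z)))).
  { rewrite !Blaschke_ND by auto.
    transitivity (Cdiv (Cdiv (Csub (Cmul (Nf p q (Cadd z h)) (Df p q z))
       (Cmul (Nf p q z) (Df p q (Cadd z h)))) (Cmul (Df p q (Cadd z h)) (Df p q z))) h).
    { f_equal. field. split; auto. }
    rewrite E_id, HW. field. repeat split; auto. }
  rewrite Eq, Cnorm_mul, Cnorm_div by (apply nz; rewrite Cnorm_mul; apply Rmult_lt_0_compat; apply Cnorm_pos; auto).
  rewrite Cnorm_mul. unfold Df at 2. rewrite Cnorm_mul. fold a b.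
  assert (HS : Cnorm (Sf p q z h) <= Sb).
  { unfold Sf. eapply Rle_trans. apply Cnorm_sub_le.
    rewrite !Cnorm_mul, !Cnorm_conj. fold P Q.
    replace (Csub (Cadd (Cadd z (Cadd z z)) h) (Cadd p q)) with (Cadd X h) by (unfold X; ring).
    unfold Df at 1. rewrite Cnorm_mul. fold a b.
    pose proof (Cnorm_triangle X h). unfold Sb.
    pose proof (Cnorm_nonneg (Nf p q z)). apply Rplus_le_compat_r, Rmult_le_compat_r; nra. }
  set (Dh := Cnorm (Df p q (Cadd z h))).
  assert (HD : a / 2 * (b / 2) <= Dh).
  { unfold Dh, Df. rewrite Cnorm_mul. apply Rmult_le_compat; lra. }
  assert (HSb : 0 <= Sb) by (unfold Sb; pose proof (Cnorm_nonneg X); pose proof (Cnorm_nonneg (Nf p q z)); apply Rplus_le_le_0_compat; apply Rmult_le_pos; nra).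
  assert (HS0 : 0 <= Cnorm (Sf p q z h)) by apply Cnorm_nonneg.
  assert (Hab : 0 < a/2*(b/2)*(a*b)) by (repeat apply Rmult_lt_0_compat; lra).
  assert (Hab2 : 0 < a/2*(b/2)) by (apply Rmult_lt_0_compat; lra).
  assert (Hab3 : 0 < a*b) by (apply Rmult_lt_0_compat; lra).
  assert (Cnorm (Sf p q z h) / (Dh * (a * b)) <= Sb / (a / 2 * (b / 2) * (a * b))).
  { unfold Rdiv. apply Rmult_le_compat; try lra.
    - apply Rlt_le, Rinv_0_lt_compat. apply Rmult_lt_0_compat; lra.
    - apply Rinv_le_contravar; auto. apply Rmult_le_compat_r; lra. }
  nra.
Qed.

Lemma W_gen (z zb p pb q qb : Cplx) :
  let A := Csub Cone (Cmul pb z) in let Bq := Csub Cone (Cmul qb z) in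
  let u := Csub (Cmul z zb) Cone in
  Cmul (Cmul z z) (Cadd (Cmul (Cmul (Csub z p) (Csub zb pb)) (Cmul (Csub z q) (Csub zb qb)))
     (Cadd (Cmul (Csub Cone (Cmul p pb)) (Cmul (Csub z q) (Csub zb qb)))
           (Cmul (Csub Cone (Cmul q qb)) (Cmul (Csub z p) (Csub zb pb)))))
  = Cadd (Cadd (Cmul (Csub z p) (Cmul (Csub z q) (Cmul A Bq)))
  (Cadd (Cmul (Csub Cone (Cmul p pb)) (Cmul z (Cmul (Csub z q) Bq)))
        (Cmul (Csub Cone (Cmul q qb)) (Cmul z (Cmul (Csub z p) A)))))
    (Cmul u (Cadd (Cmul (Cadd (Cadd A Bq) u) (Cmul (Csub z p) (Csub z q)))
       (Cadd (Cmul (Csub Cone (Cmul p pb)) (Cmul (Csub z q) z))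
             (Cmul (Csub Cone (Cmul q qb)) (Cmul (Csub z p) z))))).
Proof. intros A Bq u. unfold A, Bq, u. repeat match goal with x : Cplx |- _ => destruct x end;
  apply Cext; unfold Cmul, Csub, Cadd, Cone; simpl; ring. Qed.

Definition PhiR (p q z : Cplx) : R :=
  n2 (Csub z p) * n2 (Csub z q) + (1 - n2 p) * n2 (Csub z q) + (1 - n2 q) * n2 (Csub z p).

Lemma W_phi p q z : n2 z = 1 -> Wf p q z = Cmul (Cmul z z) (PhiR p q z, 0).
Proof.
  intro Hz.
  assert (HP : (PhiR p q z, 0) =
    (Cadd (Cmul (Cmul (Csub z p) (Csub (Cconj z) (Cconj p))) (Cmul (Csub z q) (Csub (Cconj z) (Cconj q))))
     (Cadd (Cmul (Csub Cone (Cmul p (Cconj p))) (Cmul (Csub z q) (Csub (Cconj z) (Cconj q))))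
           (Cmul (Csub Cone (Cmul q (Cconj q))) (Cmul (Csub z p) (Csub (Cconj z) (Cconj p))))))).
  { unfold PhiR, n2. destruct p, q, z. apply Cext; unfold Cmul, Csub, Cadd, Cone, Cconj; simpl; ring. }
  assert (Hu : Csub (Cmul z (Cconj z)) Cone = Czero).
  { destruct z; unfold n2 in Hz; simpl in Hz; apply Cext; unfold Cmul, Csub, Cone, Cconj; simpl; lra. }
  rewrite HP, W_gen. cbv zeta. rewrite Hu. unfold Wf, Df.
  apply Cext; destruct p, q, z; unfold Cmul, Csub, Cadd, Cone, Cconj, Czero; simpl; ring.
Qed.

Lemma crit_phi p q z : Cnorm z = 1 -> Cnorm p <> 1 -> Cnorm q <> 1 -> PhiR p q z = 0 ->
  critical_point (Blaschke p q) z.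
Proof.
  intros Hz Hp Hq H0. apply crit_W; auto.
  rewrite W_phi by (rewrite <- Cnorm_sq, Hz; ring). rewrite H0.
  apply Cext; unfold Cmul, Czero; simpl; ring.
Qed.

Definition ecirc (t : R) : Cplx := (cos t, sin t).

Lemma n2_ecirc t : n2 (ecirc t) = 1.
Proof. unfold n2, ecirc; simpl. pose proof (sin2_cos2 t). unfold Rsqr in H. lra. Qed.
Lemma Cnorm_ecirc t : Cnorm (ecirc t) = 1.
Proof. unfold Cnorm. fold (n2 (ecirc t)). rewrite n2_ecirc. apply sqrt_1. Qed.

Lemma ecirc_period t : ecirc (t + 2 * PI) = ecirc t.
Proof. unfold ecirc. pose proof (sin_period t 1); pose proof (cos_period t 1).
  simpl INR in *. replace (2 * 1 * PI) with (2 * PI) in * by ring. rewrite H, H0; auto. Qed.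

Lemma PhiT_cont p q : continuity (fun t => PhiR p q (ecirc t)).
Proof. unfold PhiR, n2, ecirc, Csub; simpl. reg. Qed.

Lemma ecirc_inj t1 t2 : 0 < t2 - t1 < 2 * PI -> ecirc t1 <> ecirc t2.
Proof.
  intros H E. unfold ecirc in E. injection E as E1 E2.
  pose proof (cos_minus t2 t1). rewrite <- E1, <- E2 in H0.
  pose proof (sin2_cos2 t1). unfold Rsqr in H1.
  pose proof (cos_2a_sin ((t2 - t1)/2)). replace (2 * ((t2 - t1)/2)) with (t2 - t1) in H2 by field.
  assert (0 < sin ((t2 - t1)/2)) by (apply sin_gt_0; lra).
  nra.
Qed.

Lemma angle_exists z : n2 z = 1 -> exists t, -PI <= t <= PI /\ ecirc t = z.
Proof.
  destruct z as [x y]. unfold n2; simpl. intro H.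
  assert (Hx : -1 <= x <= 1) by (split; nra).
  assert (Hs : sin (acos x) = Rabs y).
  { rewrite sin_acos by auto. rewrite <- sqrt_Rsqr_abs. f_equal. unfold Rsqr. lra. }
  destruct (Rle_or_lt 0 y).
  - pose proof (acos_bound x). exists (acos x). split. lra. unfold ecirc. rewrite cos_acos, Hs, Rabs_right by lra. auto.
  - pose proof (acos_bound x). exists (- acos x). split. lra. unfold ecirc. rewrite cos_neg, sin_neg, cos_acos, Hs, Rabs_left by lra.
    f_equal; ring.
Qed.

Lemma two_zeros (f : R -> R) a b : continuity f -> a < b < a + 2 * PI -> f a < 0 -> 0 < f b ->
  f (a + 2 * PI) = f a ->
  exists t1 t2, f t1 = 0 /\ f t2 = 0 /\ a < t1 < b /\ b < t2 < a + 2 * PI.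
Proof.
  intros Hc Hab Ha Hb Hp.
  destruct (IVT f a b Hc ltac:(lra) Ha Hb) as [t1 [H1 H1']].
  destruct (IVT (fun x => - f x) b (a + 2 * PI) (continuity_opp f Hc) ltac:(lra) ltac:(lra) ltac:(lra)) as [t2 [H2 H2']].
  exists t1, t2. 
  assert (t1 <> a) by (intro; subst; lra). assert (t1 <> b) by (intro; subst; lra).
  assert (t2 <> b) by (intro; subst; lra). assert (t2 <> a + 2*PI) by (intro; subst; lra).
  repeat split; auto; try lra.
Qed.

Lemma crit_two p q zn zp : Cnorm p <> 1 -> Cnorm q <> 1 -> n2 zn = 1 -> n2 zp = 1 ->
  PhiR p q zn < 0 -> 0 < PhiR p q zp ->
  exists z1 z2 : Cplx, z1 <> z2 /\ Cnorm z1 = 1 /\ Cnorm z2 = 1 /\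
    critical_point (Blaschke p q) z1 /\ critical_point (Blaschke p q) z2.
Proof.
  intros Hp Hq Hn Hpn Fn Fp.
  destruct (angle_exists zn Hn) as [tn [Btn Etn]].
  destruct (angle_exists zp Hpn) as [tp [Btp Etp]].
  set (f := fun t => PhiR p q (ecirc t)).
  assert (Hper : forall t, f (t + 2 * PI) = f t) by (intro; unfold f; rewrite ecirc_period; auto).
  assert (Fa : f tn < 0) by (unfold f; rewrite Etn; auto).
  assert (Fb : 0 < f tp) by (unfold f; rewrite Etp; auto).
  assert (HPI := PI_RGT_0).
  assert (exists b, tn < b < tn + 2 * PI /\ 0 < f b) as [b [Hb Fb']].
  { destruct (Rlt_le_dec tn tp).
    - exists tp. split; auto. split; auto.
      destruct (Rlt_le_dec tp (tn + 2*PI)); auto.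
      assert (tp = tn + 2*PI) by lra. rewrite H, Hper in Fb. lra.
    - exists (tp + 2 * PI). rewrite Hper. split; auto.
      destruct (Rlt_le_dec tp tn).
      2: assert (tp = tn) by lra; subst; lra.
      split; [|lra].
      destruct (Rlt_le_dec tn (tp + 2*PI)); auto.
      assert (tn = tp + 2*PI) by lra. rewrite H, Hper in Fa. lra. }
  destruct (two_zeros f tn b (PhiT_cont p q) Hb Fa Fb' (Hper tn)) as [t1 [t2 [Z1 [Z2 [I1 I2]]]]].
  exists (ecirc t1), (ecirc t2). repeat split.
  - apply ecirc_inj. lra.
  - apply Cnorm_ecirc.
  - apply Cnorm_ecirc.
  - apply crit_phi; auto. apply Cnorm_ecirc.
  - apply crit_phi; auto. apply Cnorm_ecirc.
Qed.

Definition Sset (K : Cplx -> Prop) (t r : R) : Prop := 0 <= r <= 1 /\ forall w, Cnorm (Csub w (ecirc t)) < r -> ~ K w.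
Lemma Sset_bound (K : Cplx -> Prop) t : bound (Sset K t).
Proof. exists 1. intros r [H _]; lra. Qed.
Lemma Sset_ne (K : Cplx -> Prop) t : exists r, Sset K t r.
Proof. exists 0. split. lra. intros w H. pose proof (Cnorm_nonneg (Csub w (ecirc t))). lra. Qed.
Definition gS (K : Cplx -> Prop) (t : R) : R := proj1_sig (completeness (Sset K t) (Sset_bound K t) (Sset_ne K t)).
Lemma gS_ub (K : Cplx -> Prop) t r : Sset K t r -> r <= gS K t.
Proof. unfold gS. destruct (completeness _ _ _) as [m [H1 H2]]. simpl. apply H1. Qed.
Lemma gS_lub (K : Cplx -> Prop) t u : (forall r, Sset K t r -> r <= u) -> gS K t <= u.
Proof. unfold gS. destruct (completeness _ _ _) as [m [H1 H2]]. simpl. apply H2. Qed.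
Lemma gS_nonneg (K : Cplx -> Prop) t : 0 <= gS K t.
Proof. apply (gS_ub K). split. lra. intros w H. pose proof (Cnorm_nonneg (Csub w (ecirc t))). lra. Qed.
Lemma gS_le1 (K : Cplx -> Prop) t : gS K t <= 1.
Proof. apply (gS_lub K). intros r [H _]; lra. Qed.

Lemma gS_lip (K : Cplx -> Prop) t s : gS K t <= gS K s + Cnorm (Csub (ecirc t) (ecirc s)).
Proof.
  set (d := Cnorm (Csub (ecirc t) (ecirc s))).
  assert (Hd : 0 <= d) by apply Cnorm_nonneg.
  apply (gS_lub K). intros r [Hr HK].
  destruct (Rle_or_lt r d). pose proof (gS_nonneg K s); lra.
  assert (r - d <= gS K s).
  { apply (gS_ub K). split. lra. intros w Hw. apply HK.
    replace (Csub w (ecirc t)) with (Cadd (Csub w (ecirc s)) (Csub (ecirc s) (ecirc t))) by ring.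
    eapply Rle_lt_trans. apply Cnorm_triangle. rewrite (Cnorm_sub_sym (ecirc s) (ecirc t)). fold d. lra. }
  lra.
Qed.

Lemma dist_cont t : continuity_pt (fun s => Cnorm (Csub (ecirc t) (ecirc s))) t.
Proof.
  unfold Cnorm, ecirc, Csub; simpl.
  apply (continuity_pt_comp (fun s => (cos t - cos s) * (cos t - cos s) + (sin t - sin s) * (sin t - sin s)) sqrt).
  - reg.
  - apply continuity_pt_sqrt. nra.
Qed.

Lemma gS_cont (K : Cplx -> Prop) t : continuity_pt (gS K) t.
Proof.
  pose proof (dist_cont t) as H. unfold continuity_pt, continue_in, limit1_in, limit_in in *.
  intros eps Heps. destruct (H eps Heps) as [alp [Ha Hx]]. exists alp. split; auto.
  intros x Hx'. specialize (Hx x Hx'). simpl in *. unfold R_dist in *.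
  replace (Cnorm (Csub (ecirc t) (ecirc t))) with 0 in Hx.
  2: { unfold Cnorm, Csub; simpl. replace (_ * _ + _ * _) with 0 by ring. symmetry; apply sqrt_0. }
  rewrite Rminus_0_r, Rabs_right in Hx by apply Rle_ge, Cnorm_nonneg.
  pose proof (gS_lip K t x). pose proof (gS_lip K x t). rewrite Cnorm_sub_sym in H1.
  apply Rabs_def1; lra.
Qed.


Lemma sep K : Ccompact K -> (forall z, K z -> Cnorm z <> 1) ->
  exists m, 0 < m /\ m <= 1 /\ forall z, K z -> m <= Rabs (Cnorm z - 1).
Proof.
  intros [Hcl _] Hc.
  assert (HPI := PI_RGT_0).
  destruct (continuity_ab_min (gS K) (-PI) PI ltac:(lra) (fun c _ => gS_cont K c)) as [tm [Hmin Htm]].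
  assert (Hpos : forall t, 0 < gS K t).
  { intro t. destruct (Hcl (ecirc t)) as [r [Hr Hw]].
    { intro HK. apply (Hc _ HK). apply Cnorm_ecirc. }
    apply Rlt_le_trans with (Rmin r 1). apply Rmin_pos; lra.
    apply gS_ub. split. split. apply Rlt_le, Rmin_pos; lra. apply Rmin_r.
    intros w Hw'. apply Hw. eapply Rlt_le_trans; [exact Hw'| apply Rmin_l]. }
  exists (gS K tm). split; [apply Hpos|]. split; [apply gS_le1|].
  intros z HK. destruct (Rle_or_lt (gS K tm) (Rabs (Cnorm z - 1))) as [|Hlt]; auto. exfalso.
  assert (Hle1 := gS_le1 K tm).
  set (N := Cnorm z) in *.
  assert (HN : 0 < N).
  { destruct (Rle_or_lt N 0); auto. pose proof (Cnorm_nonneg z). fold N in H0.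
    assert (N = 0) by lra. rewrite H1 in Hlt. rewrite Rminus_0_l, Rabs_Ropp, Rabs_R1 in Hlt. lra. }
  assert (HN2 : N * N = n2 z) by apply Cnorm_sq.
  set (u := (fst z / N, snd z / N)).
  assert (Hu : n2 u = 1).
  { unfold u, n2; simpl. unfold n2 in HN2. replace (fst z / N * (fst z / N) + snd z / N * (snd z / N)) with ((fst z * fst z + snd z * snd z) / (N * N)) by (field; lra). rewrite <- HN2. field. lra. }
  destruct (angle_exists u Hu) as [t [Bt Et]].
  assert (Hd : Cnorm (Csub z (ecirc t)) = Rabs (N - 1)).
  { rewrite Et. rewrite <- sqrt_Rsqr_abs. unfold Cnorm. f_equal.
    unfold u, Csub, Rsqr; simpl. unfold n2 in HN2.
    replace ((fst z - fst z / N) * (fst z - fst z / N) + (snd z - snd z / N) * (snd z - snd z / N))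
      with ((fst z * fst z + snd z * snd z) * ((N - 1) / N) * ((N - 1) / N)) by (field; lra).
    rewrite <- HN2. field. lra. }
  assert (Hg : Rabs (N - 1) < gS K t) by (pose proof (Hmin t Bt); lra).
  destruct (Classical_Prop.classic (exists r, Sset K t r /\ Rabs (N - 1) < r)) as [[r [[_ Hr] Hr']]|Hno].
  - apply (Hr z). lra. auto.
  - assert (gS K t <= Rabs (N - 1)).
    { apply gS_lub. intros r Hr. destruct (Rle_or_lt r (Rabs (N - 1))); auto. exfalso; apply Hno; eauto. }
    lra.
Qed.

Definition rot (p : Cplx) (c s : R) : Cplx := Cmul (fst p / Cnorm p, snd p / Cnorm p) (c, s).

Lemma rot_n2 p c s : 0 < Cnorm p -> c * c + s * s = 1 -> n2 (rot p c s) = 1.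
Proof.
  intros HP Hcs. pose proof (Cnorm_sq p) as HN. unfold rot, n2, Cmul in *; simpl.
  set (P := Cnorm p) in *. destruct p as [a b]; simpl in *.
  transitivity ((a * a + b * b) / (P * P) * (c * c + s * s)). field. lra.
  rewrite Hcs, <- HN. field. lra.
Qed.

Lemma rot_dist p c s : 0 < Cnorm p -> c * c + s * s = 1 ->
  n2 (Csub (rot p c s) p) = 1 + Cnorm p * Cnorm p - 2 * c * Cnorm p.
Proof.
  intros HP Hcs. pose proof (Cnorm_sq p) as HN. unfold rot, n2, Cmul, Csub in *; simpl.
  set (P := Cnorm p) in *. destruct p as [a b]; simpl in *.
  transitivity ((a * a + b * b) / (P * P) * (c * c + s * s) - 2 * c * (a * a + b * b) / P + (a*a+b*b)).
  field. lra.
  rewrite Hcs, <- HN. field. lra.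
Qed.

Lemma rot_diff p c s : 0 < Cnorm p ->
  n2 (Csub (rot p c s) (rot p c (-s))) = 4 * (s * s).
Proof.
  intros HP. pose proof (Cnorm_sq p) as HN. unfold rot, n2, Cmul, Csub in *; simpl.
  set (P := Cnorm p) in *. destruct p as [a b]; simpl in *.
  transitivity (4 * (s * s) * ((a * a + b * b) / (P * P))). field. lra.
  rewrite <- HN. field. lra.
Qed.

Lemma n2_ge w b : 0 <= b -> b <= Cnorm w -> b * b <= n2 w.
Proof. intros. rewrite <- Cnorm_sq. nra. Qed.

Lemma n2_unit_dist z w : n2 z = 1 -> Cnorm w - 1 <= Cnorm (Csub z w).
Proof. intros H. assert (Cnorm z = 1). { unfold Cnorm; fold (n2 z); rewrite H; apply sqrt_1. }
  pose proof (Cnorm_rev w z). rewrite Cnorm_sub_sym in H1. lra. Qed.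
Lemma n2_unit_dist' z w : n2 z = 1 -> 1 - Cnorm w <= Cnorm (Csub z w).
Proof. intros H. assert (Cnorm z = 1). { unfold Cnorm; fold (n2 z); rewrite H; apply sqrt_1. }
  pose proof (Cnorm_rev z w). lra. Qed.

Lemma case2 p q m : 0 < m -> Cnorm q <= 1 - m -> 1 < Cnorm p -> Cnorm p - 1 < m * m ->
  exists zn zp, n2 zn = 1 /\ n2 zp = 1 /\ PhiR p q zn < 0 /\ 0 < PhiR p q zp.
Proof.
  intros Hm HQ HP He.
  set (P := Cnorm p) in *. set (Q := Cnorm q) in *.
  assert (HP0 : 0 < P) by lra.
  assert (HQ0 : 0 <= Q) by apply Cnorm_nonneg.
  assert (Hnp : n2 p = P * P) by (symmetry; apply Cnorm_sq).
  assert (Hnq : n2 q = Q * Q) by (symmetry; apply Cnorm_sq).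
  exists (rot p 1 0), (rot p (-1) 0).
  assert (U1 : n2 (rot p 1 0) = 1) by (apply rot_n2; auto; ring).
  assert (U2 : n2 (rot p (-1) 0) = 1) by (apply rot_n2; auto; ring).
  split; auto. split; auto. split.
  - pose proof (rot_dist p 1 0 HP0 ltac:(ring)) as D. fold P in D.
    set (X := n2 (Csub (rot p 1 0) q)).
    assert (HX : (1 - Q) * (1 - Q) <= X) by (apply n2_ge; [lra| apply n2_unit_dist'; auto]).
    unfold PhiR. rewrite D, Hnp, Hnq. fold X.
    replace ((1 + P * P - 2 * 1 * P) * X + (1 - P * P) * X + (1 - Q * Q) * (1 + P * P - 2 * 1 * P))
      with ((P - 1) * (-2 * X + (1 - Q * Q) * (P - 1))) by ring.
    assert (-2 * X + (1 - Q * Q) * (P - 1) < 0) by nra.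
    nra.
  - pose proof (rot_dist p (-1) 0 HP0 ltac:(ring)) as D. fold P in D.
    set (Y := n2 (Csub (rot p (-1) 0) q)).
    assert (HY : 0 <= Y) by apply n2_nonneg.
    unfold PhiR. rewrite D, Hnp, Hnq. fold Y.
    replace ((1 + P * P - 2 * -1 * P) * Y + (1 - P * P) * Y + (1 - Q * Q) * (1 + P * P - 2 * -1 * P))
      with ((P + 1) * (2 * Y + (1 - Q * Q) * (P + 1))) by ring.
    assert (0 < 1 - Q * Q) by nra.
    apply Rmult_lt_0_compat; nra.
Qed.

Lemma case1 p q m M : 0 < m -> m <= 1/2 -> 2 <= M -> 1 + m <= Cnorm p -> Cnorm p <= M ->
  Cnorm q < 1 -> 1 - Cnorm q < m * m / (4 * (M * M)) ->
  exists zn zp, n2 zn = 1 /\ n2 zp = 1 /\ PhiR p q zn < 0 /\ 0 < PhiR p q zp.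
Proof.
  intros Hm Hm2 HM HP1 HP2 HQ1 He.
  set (P := Cnorm p) in *. set (Q := Cnorm q) in *.
  set (eps := 1 - Q) in *.
  assert (HMM : 0 < 4 * (M * M)) by nra.
  assert (Hd : m * m / (4 * (M * M)) * (4 * (M * M)) = m * m) by (field; lra).
  assert (He' : eps * (4 * (M * M)) < m * m) by (rewrite <- Hd; apply Rmult_lt_compat_r; lra).
  assert (He0 : 0 < eps) by (unfold eps; lra).
  assert (HP0 : 0 < P) by lra.
  assert (eps < 1) by nra. assert (HQ0 : 0 < Q) by (unfold eps in *; lra).
  assert (Hnp : n2 p = P * P) by (symmetry; apply Cnorm_sq).
  assert (Hnq : n2 q = Q * Q) by (symmetry; apply Cnorm_sq).
  set (c := (1 + / P) / 2).
  assert (Hc : 0 <= c <= 1).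
  { unfold c. assert (0 < / P < 1) by (split; [apply Rinv_0_lt_compat; lra| rewrite <- Rinv_1; apply Rinv_lt_contravar; lra]). lra. }
  set (s := sqrt (1 - c * c)).
  assert (Hs0 : 0 <= s) by apply sqrt_pos.
  assert (Hss : s * s = 1 - c * c) by (apply sqrt_sqrt; nra).
  assert (Hcs : c * c + s * s = 1) by lra.
  assert (Hcs' : c * c + (- s) * (- s) = 1) by lra.
  assert (HcP : c * P = (P + 1) / 2) by (unfold c; field; lra).
  assert (Hs2 : m / (2 * M) <= s * s).
  { assert (1 - c = (P - 1) / (2 * P)) by (unfold c; field; lra).
    assert (m / (2 * M) <= (P - 1) / (2 * P)).
    { unfold Rdiv. apply Rmult_le_compat; try lra.
      - apply Rlt_le, Rinv_0_lt_compat; lra.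
      - apply Rinv_le_contravar; lra. }
    nra. }
  assert (Hneg : forall z, n2 z = 1 -> n2 (Csub z p) = P * P - P -> s * s <= n2 (Csub z q) ->
            PhiR p q z < 0).
  { intros z Hz Dz HX. set (X := n2 (Csub z q)) in *.
    unfold PhiR. rewrite Dz, Hnp, Hnq. fold X.
    replace ((P * P - P) * X + (1 - P * P) * X + (1 - Q * Q) * (P * P - P))
      with ((P - 1) * ((1 - Q * Q) * P - X)) by ring.
    assert (1 - Q * Q <= 2 * eps) by (unfold eps; nra).
    assert ((1 - Q * Q) * P <= 2 * eps * M) by nra.
    assert (2 * eps * M * (2 * M) < m * m) by nra.
    assert (m / (2 * M) * (2 * M) = m) by (field; lra).
    assert (2 * eps * M < m / (2 * M)) by nra.
    nra. }
  assert (Dp : n2 (Csub (rot p c s) p) = P * P - P) by (rewrite rot_dist; fold P; auto; nra).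
  assert (Dm : n2 (Csub (rot p c (-s)) p) = P * P - P) by (rewrite rot_dist; fold P; auto; nra).
  assert (Hdiff : Cnorm (Csub (rot p c s) (rot p c (-s))) = 2 * s).
  { unfold Cnorm. fold (n2 (Csub (rot p c s) (rot p c (-s)))). rewrite rot_diff by auto.
    replace (4 * (s * s)) with ((2 * s) * (2 * s)) by ring. apply sqrt_square. lra. }
  assert (Htri : 2 * s <= Cnorm (Csub (rot p c s) q) + Cnorm (Csub (rot p c (-s)) q)).
  { rewrite <- Hdiff.
    replace (Csub (rot p c s) (rot p c (-s))) with (Csub (Csub (rot p c s) q) (Csub (rot p c (-s)) q)) by ring.
    apply Cnorm_sub_le. }
  assert (HZn : exists zn, n2 zn = 1 /\ PhiR p q zn < 0).
  { destruct (Rle_or_lt s (Cnorm (Csub (rot p c s) q))).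
    - exists (rot p c s). split. apply rot_n2; auto. apply Hneg; auto. apply rot_n2; auto. apply n2_ge; auto.
    - exists (rot p c (-s)). split. apply rot_n2; auto. apply Hneg; auto. apply rot_n2; auto. apply n2_ge; auto. lra. }
  destruct HZn as [zn [Hzn Fzn]].
  exists zn, (rot q 1 0). split; auto. split. apply rot_n2; auto; ring. split; auto.
  pose proof (rot_dist q 1 0 HQ0 ltac:(ring)) as D. fold Q in D.
  set (Z := n2 (Csub (rot q 1 0) p)).
  assert (HZ : (P - 1) * (P - 1) <= Z) by (apply n2_ge; [lra| apply n2_unit_dist; apply rot_n2; auto; ring]).
  unfold PhiR. rewrite D, Hnp, Hnq. fold Z.
  replace (Z * (1 + Q * Q - 2 * 1 * Q) + (1 - P * P) * (1 + Q * Q - 2 * 1 * Q) + (1 - Q * Q) * Z)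
    with (eps * (2 * Z - eps * (P * P - 1))) by (unfold eps; ring).
  apply Rmult_lt_0_compat; auto.
  assert (P * P - 1 <= M * M) by nra.
  assert (eps * (P * P - 1) <= eps * (M * M)) by (apply Rmult_le_compat_l; lra).
  assert (eps * (P * P - 1) < m * m) by nra.
  assert (m * m <= (P - 1) * (P - 1)) by nra.
  assert (0 < m * m) by nra. lra.
Qed.

Theorem mainTheorem13 (K : Cplx -> Prop) :
  Ccompact K -> (forall z, K z -> Cnorm z <> 1) ->
  exists delta, 0 < delta /\
    forall p q : Cplx,
      ((K p /\ 1 < Cnorm p /\ Cnorm q < 1 /\ dist_circle q < delta) \/
       (K q /\ Cnorm q < 1 /\ 1 < Cnorm p /\ dist_circle p < delta)) ->
      exists z1 z2 : Cplx, z1 <> z2 /\ Cnorm z1 = 1 /\ Cnorm z2 = 1 /\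
        critical_point (Blaschke p q) z1 /\ critical_point (Blaschke p q) z2.
Proof.
  intros Hcomp Hc.
  destruct (sep K Hcomp Hc) as [m0 [Hm0 [Hm01 Hsep]]].
  destruct Hcomp as [_ [M0 HM0]].
  set (m := Rmin m0 (1/2)). set (M := Rmax M0 2).
  assert (Hm : 0 < m) by (apply Rmin_pos; lra).
  assert (Hm1 : m <= 1/2) by apply Rmin_r.
  assert (Hmm0 : m <= m0) by apply Rmin_l.
  assert (HM : 2 <= M) by apply Rmax_r.
  assert (HMM0 : M0 <= M) by apply Rmax_l.
  assert (HMM : 0 < 4 * (M * M)) by nra.
  exists (m * m / (4 * (M * M))). split.
  { apply Rdiv_lt_0_compat; nra. }
  assert (Hd : m * m / (4 * (M * M)) * (4 * (M * M)) = m * m) by (field; lra).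
  intros p q [[Kp [HP [HQ Hd1]]] | [Kq [HQ [HP Hd1]]]]; unfold dist_circle in Hd1.
  - pose proof (Hsep p Kp). pose proof (HM0 p Kp).
    rewrite Rabs_right in H by lra. rewrite Rabs_left in Hd1 by lra.
    destruct (case1 p q m M) as [zn [zp [H1 [H2 [H3 H4]]]]]; auto; try lra.
    apply (crit_two p q zn zp); auto; lra.
  - pose proof (Hsep q Kq).
    rewrite Rabs_left in H by lra. rewrite Rabs_right in Hd1 by lra.
    assert (Cnorm p - 1 < m * m).
    { assert ((Cnorm p - 1) * (4 * (M * M)) < m * m) by (rewrite <- Hd; apply Rmult_lt_compat_r; lra).
      assert (Cnorm p - 1 <= (Cnorm p - 1) * (4 * (M * M))) by (assert (1 <= 4 * (M * M)) by nra; rewrite <- (Rmult_1_r (Cnorm p - 1)) at 1; apply Rmult_le_compat_l; lra). lra. }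
    destruct (case2 p q m) as [zn [zp [H1 [H2 [H3 H4]]]]]; auto; try lra.
    apply (crit_two p q zn zp); auto; lra.
Qed.
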